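(* Let $\Delta:M_n\to M_n$ be a weak-2-local derivation, let $p_1,\ldots,p_n$ be mutually orthogonal minimal projections in $M_n$, and let $q=1-p_n$. Suppose that $\Delta$ is symmetric (i.e. $\Delta(a^* )^*=\Delta(a)$ for all $a\in M_n$) and $\Delta(qa)=0$ for every $a\in M_n$. Then $\Delta(qa+p_naq)=0$ for every $a\in M_n$.
   Context: $M_n=M_n(\mathbb{C})$. A derivation on $M_n$ is a linear map $D$ with $D(ab)=D(a)b+aD(b)$. A (not necessarily linear) map $\Delta:M_n\to M_n$ is a weak-2-local derivation if for every $a,b\in M_n$ and every $\phi\in M_n^*$ there exists a derivation $D_{a,b,\phi}$ such that $\phi\Delta(a)=\phi D_{a,b,\phi}(a)$ and $\phi\Delta(b)=\phi D_{a,b,\phi}(b)$. *)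

(* Defs.v *)
From mathcomp Require Import all_boot all_algebra.
From mathcomp Require Import reals complex.
Set Implicit Arguments. Unset Strict Implicit. Unset Printing Implicit Defensive.
Import GRing.Theory Num.Theory.
Local Open Scope ring_scope.

Definition adjmx (R : realType) (n : nat) (a : 'M[R[i]]_n) : 'M[R[i]]_n :=
  (map_mx Num.conj a)^T.

Definition is_functional (R : realType) (n : nat) (phi : 'M[R[i]]_n -> R[i]) :=
  forall (c : R[i]) (x y : 'M[R[i]]_n), phi (c *: x + y) = c * phi x + phi y.

Definition is_derivation (R : realType) (n : nat) (D : 'M[R[i]]_n -> 'M[R[i]]_n) :=
  (forall (c : R[i]) (x y : 'M[R[i]]_n), D (c *: x + y) = c *: D x + D y) /\
  (forall x y : 'M[R[i]]_n, D (x *m y) = D x *m y + x *m D y).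

Definition weak_2_local_derivation (R : realType) (n : nat)
    (Delta : 'M[R[i]]_n -> 'M[R[i]]_n) :=
  forall (a b : 'M[R[i]]_n) (phi : 'M[R[i]]_n -> R[i]), is_functional phi ->
    exists D, is_derivation D /\ phi (Delta a) = phi (D a) /\ phi (Delta b) = phi (D b).

Definition is_projection (R : realType) (n : nat) (p : 'M[R[i]]_n) :=
  adjmx p = p /\ p *m p = p.

(* Minimal projection: a nonzero projection with no projection strictly
   between 0 and p (e <= p means e = e p). *)
Definition is_minimal_projection (R : realType) (n : nat) (p : 'M[R[i]]_n) :=
  is_projection p /\ p <> 0 /\
  forall e : 'M[R[i]]_n, is_projection e -> e *m p = e -> e = 0 \/ e = p.

(* Main.v *)
Require Import Defs.
From mathcomp Require Import all_boot all_algebra.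
From mathcomp Require Import reals complex zify.
Set Implicit Arguments. Unset Strict Implicit. Unset Printing Implicit Defensive.
Import GRing.Theory Num.Theory.
Local Open Scope ring_scope.

Lemma mxtrace_sum (F : fieldType) n (I : finType) (G : I -> 'M[F]_n) :
  \tr (\sum_i G i) = \sum_i \tr (G i).
Proof. exact: raddf_sum. Qed.

Section Der.
Variables (R : realType) (n : nat).
Local Notation M := 'M[R[i]]_n.
Variable D : M -> M.
Hypothesis hD : is_derivation D.

Lemma derD x y : D (x + y) = D x + D y.
Proof. by have := hD.1 1 x y; rewrite !scale1r. Qed.
Lemma der0 : D 0 = 0.
Proof. have h := derD 0 0; rewrite addr0 in h; apply: (addrI (D 0)); by rewrite addr0 -h. Qed.
Lemma derZ c x : D (c *: x) = c *: D x.
Proof. by have := hD.1 c x 0; rewrite !addr0 der0 addr0. Qed.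
Lemma derB x y : D (x - y) = D x - D y.
Proof. by rewrite -scaleN1r derD derZ scaleN1r. Qed.
Lemma derM x y : D (x *m y) = D x *m y + x *m D y.
Proof. exact: hD.2. Qed.
Lemma der_sum (I : finType) (F : I -> M) : D (\sum_i F i) = \sum_i D (F i).
Proof. exact: (big_morph D derD der0). Qed.
Lemma trD_comm x y : \tr (D (x *m y)) = \tr (D (y *m x)).
Proof. by rewrite !derM !mxtraceD [\tr (D x *m y)]mxtrace_mulC [\tr (x *m D y)]mxtrace_mulC addrC. Qed.
Lemma trD_delta i j : i != j -> \tr (D (delta_mx i j)) = 0.
Proof.
move=> ne; rewrite -(mul_delta_mx i i j) trD_comm mul_delta_mx_0 ?der0 ?mxtrace0 //.
by rewrite eq_sym.
Qed.
Lemma trD_diag i j : \tr (D (delta_mx i i)) = \tr (D (delta_mx j j)).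
Proof. by rewrite -(mul_delta_mx j i i) trD_comm mul_delta_mx. Qed.
Lemma trD_ii i : \tr (D (delta_mx i i)) = 0.
Proof.
have h1 : \sum_j \tr (D (delta_mx j j)) = 0.
  rewrite -mxtrace_sum -der_sum.
  have -> : \sum_j delta_mx j j = 1%:M :> M.
    apply/matrixP => a b; rewrite summxE !mxE (bigD1 a) //= big1 ?addr0.
      by rewrite !mxE eqxx /= eq_sym.
    by move=> j ne; rewrite mxE eq_sym (negbTE ne).
  have h := derM 1%:M 1%:M; rewrite !mul1mx !mulmx1 in h.
  have -> : D 1%:M = 0 by apply: (addrI (D 1%:M)); rewrite addr0 -h.
  by rewrite mxtrace0.
have h2 : \sum_(j : 'I_n) \tr (D (delta_mx j j)) = \tr (D (delta_mx i i)) *+ n.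
  by rewrite (eq_bigr (fun _ => \tr (D (delta_mx i i)))) ?sumr_const ?card_ord // => j _; apply: trD_diag.
move: h1; rewrite h2 => /eqP; rewrite mulrn_eq0 => /orP[/eqP hn|/eqP //].
exfalso; clear h2; case: i => k hk.
by rewrite hn in hk.
Qed.
Lemma trD0 (w : M) : \tr (D w) = 0.
Proof.
rewrite {1}[w]matrix_sum_delta der_sum mxtrace_sum big1 // => i _.
rewrite der_sum mxtrace_sum big1 // => j _.
rewrite derZ mxtraceZ; case: (eqVneq i j) => [<-|ne]; first by rewrite trD_ii mulr0.
by rewrite trD_delta ?mulr0.
Qed.
Lemma trxDx (x : M) : \tr (x *m D x) = 0.
Proof.
have h := trD0 (x *m x); rewrite derM mxtraceD mxtrace_mulC -mulr2n in h.
by move/eqP: h; rewrite mulrn_eq0 /= => /eqP.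
Qed.
End Der.
Lemma adjM (R : realType) n (a b : 'M[R[i]]_n) : adjmx (a *m b) = adjmx b *m adjmx a.
Proof. by rewrite /adjmx map_mxM trmx_mul. Qed.
Lemma adjB (R : realType) n (a b : 'M[R[i]]_n) : adjmx (a - b) = adjmx a - adjmx b.
Proof. by rewrite /adjmx map_mxB linearB. Qed.
Lemma adj1 (R : realType) n : adjmx (1%:M : 'M[R[i]]_n) = 1%:M.
Proof. by rewrite /adjmx map_mx1 trmx1. Qed.
Lemma adj0 (R : realType) n : adjmx (0 : 'M[R[i]]_n) = 0.
Proof. by rewrite /adjmx map_mx0 trmx0. Qed.

Lemma tr_delta (F : fieldType) n (M : 'M[F]_n) i j : \tr (delta_mx j i *m M) = M i j.
Proof.
rewrite /mxtrace (bigD1 j) //= big1 ?addr0 => [|k nk]; rewrite !mxE.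
  rewrite (bigD1 i) //= big1 ?addr0 => [|l nl]; first by rewrite !mxE !eqxx mul1r.
  by rewrite mxE eqxx (negbTE nl) mul0r.
by rewrite big1 // => l _; rewrite mxE (negbTE nk) mul0r.
Qed.

Lemma idem_base (F : fieldType) n (E : 'M[F]_n) : E *m E = E -> row_base E *m col_base E = 1%:M.
Proof.
move=> hE.
case/row_fullP: (col_base_full E) => L hL.
case/row_freeP: (row_base_free E) => Rr hR.
set cb := col_base E in hL *; set rb := row_base E in hR *.
have hb : cb *m rb = E := mulmx_base E.
have e1 : L *m (cb *m rb) *m Rr = 1%:M.
  by rewrite (mulmxA L cb rb) hL mul1mx hR.
have e2 : L *m (cb *m rb) *m (cb *m rb) *m Rr = rb *m cb.
  by rewrite (mulmxA L cb rb) hL mul1mx (mulmxA rb cb rb) -(mulmxA (rb *m cb) rb Rr) hR mulmx1.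
rewrite hb in e1 e2; rewrite -e2 -(mulmxA L E E) hE //.
Qed.

Lemma tr_idem (F : fieldType) n (E : 'M[F]_n) : E *m E = E -> \tr E = (\rank E)%:R.
Proof.
move=> hE; rewrite -{1}(mulmx_base E) mxtrace_mulC idem_base // mxtrace1 //.
Qed.

Lemma rank1_corner (F : fieldType) n (P C : 'M[F]_n) : \rank P = 1%N ->
  exists l, P *m C *m P = l *: P.
Proof.
move=> hr; have := mulmx_base P; move: (col_base P) (row_base P); rewrite hr => u v <-.
exists ((v *m C *m u) 0 0).
rewrite (mulmxA (u *m v *m C) u v) -(mulmxA (u *m v) C u) -(mulmxA u v (C *m u)) (mulmxA v C u).
set c := (v *m C *m u) 0 0.
by rewrite [v *m C *m u]mx11_scalar mul_mx_scalar -scalemxAl.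
Qed.

Lemma rank_pmax (R : realType) m (p : 'I_m.+1 -> 'M[R[i]]_m.+1) :
  (forall k, p k *m p k = p k) -> (forall k, p k != 0) ->
  (forall k l, k != l -> p k *m p l = 0) -> \rank (p ord_max) = 1%N.
Proof.
move=> hid hnz horth.
set S := \sum_k p k.
have hS : S *m S = S.
  rewrite /S mulmx_suml; apply: eq_bigr => k _.
  rewrite mulmx_sumr (bigD1 k) //= big1 ?addr0 ?hid // => l nl.
  by apply: horth; rewrite eq_sym.
have htr : (\sum_k \rank (p k))%N%:R = (\rank S)%:R :> R[i].
  rewrite -tr_idem // natr_sum /S mxtrace_sum; apply: eq_bigr => k _.
  by rewrite tr_idem.
move/eqP: htr; rewrite eqr_nat => /eqP hsum.
have hle := rank_leq_col S.
have hge : forall k, (1 <= \rank (p k))%N by move=> k; rewrite lt0n mxrank_eq0.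
rewrite (bigD1 ord_max) //= in hsum.
set X := bigop _ _ _ in hsum.
have : (m <= X)%N.
  have h1 : (\sum_(k : 'I_m.+1 | k != ord_max) 1 <= \sum_(k | k != ord_max) \rank (p k))%N.
    by apply: leq_sum => k _; exact: hge.
  by move: h1; rewrite sum1_card cardC1 card_ord.
have := hge ord_max; lia.
Qed.

Lemma trB (F : fieldType) n (A B : 'M[F]_n) : \tr (A - B) = \tr A - \tr B.
Proof. exact: raddfB. Qed.

Theorem lemma2p7 (R : realType) (m : nat)
    (Delta : 'M[R[i]]_m.+1 -> 'M[R[i]]_m.+1)
    (p : 'I_m.+1 -> 'M[R[i]]_m.+1) :
  weak_2_local_derivation Delta ->
  (forall k, is_minimal_projection (p k)) ->
  (forall k l, k != l -> p k *m p l = 0) ->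
  (forall a, adjmx (Delta (adjmx a)) = Delta a) ->
  (forall a, Delta ((1%:M - p ord_max) *m a) = 0) ->
  forall a, Delta ((1%:M - p ord_max) *m a + p ord_max *m a *m (1%:M - p ord_max)) = 0.
Proof.
move=> hW hmin horth hsym hq a.
have hr : \rank (p ord_max) = 1%N.
  apply: rank_pmax => // k; first by case: (hmin k) => [[_ ->]].
  by case: (hmin k) => _ [/eqP].
set P := p ord_max in hq hr *.
have hPadj : adjmx P = P by case: (hmin ord_max) => [[]].
set q := 1%:M - P in hq *.
set y := q *m a + P *m a *m q.
have hqr : forall w, Delta (w *m q) = 0.
  move=> w; rewrite -hsym adjM /q adjB adj1 hPadj hq adj0 //.
have KL : forall z, Delta z = 0 -> \tr ((y - z) *m Delta y) = 0.
  move=> z hz.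
  have hf : is_functional (fun w => \tr ((y - z) *m w)).
    by move=> c u v; rewrite mulmxDr mxtraceD -scalemxAr mxtraceZ.
  case: (hW y z _ hf) => D [hD [e1 e2]].
  rewrite e1 hz mulmx0 mxtrace0 in e2 *.
  have -> : D y = D z + D (y - z) by rewrite -derD // addrC subrK.
  by rewrite mulmxDr mxtraceD -e2 add0r trxDx.
have KL0 : \tr (Delta y) = 0.
  have hf : is_functional (fun w : 'M[R[i]]_m.+1 => \tr w).
    by move=> c u v; rewrite mxtraceD mxtraceZ.
  case: (hW y y _ hf) => D [hD [e1 _]].
  by rewrite e1 trD0.
have diff : forall u v : 'M[R[i]]_m.+1, (y - u) - (y - v) = v - u.
  by move=> u v; rewrite opprB addrC addrA subrK.
have H1 : forall w, \tr ((q *m w) *m Delta y) = 0.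
  move=> w.
  have -> : q *m w = (y - q *m (a - w)) - (y - q *m a).
    by rewrite diff mulmxBr opprB addrC subrK.
  by rewrite mulmxBl trB !KL ?subrr.
have H2 : forall w, \tr ((w *m q) *m Delta y) = 0.
  move=> w.
  have -> : w *m q = (y - (a - w) *m q) - (y - a *m q).
    by rewrite diff mulmxBl opprB addrC subrK.
  by rewrite mulmxBl trB !KL ?subrr ?hqr.
have h1q : 1%:M - q = P by rewrite /q opprB addrC subrK.
have hqP : q + P = 1%:M by rewrite /q subrK.
clearbody q.
have hall : forall C, \tr (C *m Delta y) = 0.
  move=> C.
  have [l hl] := rank1_corner C hr.
  have eC : C = q *m C + (P *m C) *m q + (l *: 1%:M - l *: (q *m 1%:M)).
    rewrite mulmx1 -scalerBr h1q -hl.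
    by rewrite -addrA -mulmxDr hqP mulmx1 -mulmxDl hqP mul1mx.
  rewrite eC !mulmxDl !mxtraceD H1 H2 mulNmx -!scalemxAl raddfN /= !mxtraceZ mul1mx KL0 H1.
  by rewrite mulr0 subrr !addr0.
apply/matrixP => i j; rewrite mxE.
by rewrite -tr_delta hall.
Qed.
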